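(* For all positive integers $n$ and $k$, $$\sum_{i=1}^{k}(-1)^i\binom{ni}{k}\binom{k+1}{i+1}=(-1)^k\binom{n+k-1}{k}.$$
   Context: Binomial coefficients $\binom{m}{j}$ for nonnegative integers $m,j$ are the usual ones, with $\binom{m}{j}=0$ when $j>m$. *)

(* Defs.v *)
From mathcomp Require Import all_boot all_order all_algebra.

(* Main.v *)
Require Import Defs.
From mathcomp Require Import all_boot all_order all_algebra zify.
Import GRing.Theory Num.Theory.
Local Open Scope ring_scope.

Definition S (m : nat) (f : nat -> int) : int :=
  \sum_(j < m.+1) (-1) ^+ j * ('C(m, j))%:R * f j.

Lemma S_succ m f : S m.+1 f = S m f - S m (fun j => f j.+1).
Proof.
rewrite /S big_ord_recl /=.
under eq_bigr => i _ do rewrite /bump /= binS natrD mulrDr mulrDl.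
rewrite big_split /= addrA; congr (_ + _).
  rewrite [in RHS]big_ord_recl /= [X in _ + X = _]big_ord_recr /= !bin0.
  rewrite (bin_small (ltnSn m)) mulr0 mul0r addr0; congr (_ + _).
rewrite -sumrN; apply: eq_bigr => i _.
by rewrite add1n exprS !mulN1r !mulNr.
Qed.

Lemma S_ext m f g : f =1 g -> S m f = S m g.
Proof. by move=> fg; apply: eq_bigr => j _; rewrite fg. Qed.

Lemma S_lin m r (c : nat -> int) (g : nat -> nat -> int) :
  S m (fun j => \sum_(e < r) c e * g e j) = \sum_(e < r) c e * S m (g e).
Proof.
rewrite /S; under eq_bigr => j _ do rewrite big_distrr.
rewrite exchange_big; apply: eq_bigr => e _; rewrite big_distrr.
by apply: eq_bigr => j _ /=; rewrite mulrCA.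
Qed.

Lemma S_pow m d : (d < m)%N -> S m (fun j => (j%:R) ^+ d) = 0.
Proof.
elim: m d => [//|m IH] d hd.
rewrite S_succ.
rewrite (@S_ext m (fun j => (j.+1)%:R ^+ d)
   (fun j => \sum_(e < d.+1) ('C(d, e))%:R * (fun e j => (j%:R : int) ^+ e) e j)); last first.
  by move=> j; rewrite -natr1 exprD1n; apply: eq_bigr => e _; rewrite mulr_natl.
rewrite (S_lin m d.+1 (fun e => ('C(d, e))%:R) (fun e j => (j%:R : int) ^+ e)) big_ord_recr /= big1 ?add0r ?binn ?mul1r ?subrr //.
move=> e _; rewrite IH ?mulr0 //.
exact: leq_trans (ltn_ord e) _.
Qed.

Lemma S_poly m (p : {poly int}) : (size p <= m)%N -> S m (fun j => p.[j%:R]) = 0.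
Proof.
move=> hp.
rewrite (@S_ext m _ (fun j => \sum_(e < size p) p`_e * (fun e j => (j%:R : int) ^+ e) e j)); last first.
  by move=> j; rewrite horner_coef.
rewrite (S_lin m (size p) (fun e => p`_e) (fun e j => (j%:R : int) ^+ e)) big1 // => e _; rewrite S_pow ?mulr0 //.
exact: leq_trans (ltn_ord e) hp.
Qed.

Definition P (n k : nat) : {poly int} :=
  \prod_(t < k) Poly [:: - ((n + t)%:R); n%:R].

Lemma size_P n k : (size (P n k) <= k.+1)%N.
Proof.
elim: k => [|k IH]; first by rewrite /P big_ord0 size_poly1.
rewrite /P big_ord_recr /=.
apply: leq_trans (size_polyMleq _ _) _.
have := size_Poly [:: - ((n + k)%:R : int); n%:R] => /= h.
rewrite -/(P n k).
move: IH h; set a := size (P n k); set b := size _; lia.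
Qed.

Lemma hornerP n k (x : int) : (P n k).[x] = \prod_(t < k) (n%:R * x - (n + t)%:R).
Proof.
rewrite /P horner_prod; apply: eq_bigr => t _.
by rewrite horner_Poly /= mul0r add0r addrC.
Qed.

Lemma ffz a k : \prod_(t < k) (a%:R - t%:R : int) = (a ^_ k)%:R.
Proof.
elim: k => [|k IH]; first by rewrite big_ord0 ffactn0.
rewrite big_ord_recr /= IH ffactnSr natrM.
case: (leqP k a) => h; first by rewrite natrB.
by rewrite (ffact_small h) !mul0r.
Qed.

Lemma rise n' k : \prod_(t < k) ((n'.+1 + t)%:R : int) = ((n' + k) ^_ k)%:R.
Proof.
elim: k => [|k IH]; first by rewrite big_ord0 ffactn0.
rewrite big_ord_recr /= IH addnS ffactSS natrM mulrC.
by rewrite addSn.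
Qed.

Theorem mainTheorem2 (n k : nat) (hn : (0 < n)%N) (hk : (0 < k)%N) :
  \sum_(1 <= i < k.+1) ((-1) ^+ i * ('C(n * i, k))%:R * ('C(k.+1, i.+1))%:R : int)
  = (-1) ^+ k * ('C(n + k - 1, k))%:R.
Proof.
have H := S_poly _ _ (size_P n k).
rewrite /S big_ord_recl big_ord_recl /= in H.
have E0 : (P n k).[0%:R] = (-1) ^+ k * ('C(n + k - 1, k) * k`!)%:R.
  rewrite hornerP.
  under eq_bigr => t _ do rewrite mulr0 sub0r.
  rewrite prodrN card_ord bin_ffact; congr (_ * _).
  have -> : (n + k - 1 = n.-1 + k)%N by lia.
  by rewrite -rise prednK.
have E1 : (P n k).[1%:R] = 0.
  rewrite hornerP -(prednK hk).
  by rewrite big_ord_recl /= mulr1 addn0 subrr mul0r.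
have Ei : forall i : nat, (P n k).[i.+2%:R] = ('C(n * i.+1, k) * k`!)%:R.
  move=> i; rewrite hornerP bin_ffact -ffz.
  apply: eq_bigr => t _.
  by rewrite -natrM mulnS !natrD opprD addrACA subrr add0r.
rewrite /bump /= !add1n in H.
rewrite E0 E1 mulr0 add0r expr0 bin0 !mul1r in H.
rewrite (eq_bigr (fun i : 'I_k => (-1)^+i.+2 * ('C(k.+1,i.+2))%:R * (('C(n*i.+1,k) * k`!)%:R : int))) in H; last by move=> i _; rewrite Ei.
have kf : (k`!%:R : int) != 0 by rewrite pnatr_eq0 -lt0n fact_gt0.
apply: (mulIf kf).
rewrite big_add1 /= big_mkord mulr_suml.
move/eqP: H; rewrite addr_eq0 natrM mulrA => /eqP ->.
rewrite -sumrN; apply: eq_bigr => i _.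
rewrite natrM !exprS; lia.
Qed.
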